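(* Let $X\in\mathbb{R}^{L\times S}$ be a matrix of location profiles, let $w_S\in\mathbb{R}^S$ and $w_L\in\mathbb{R}^L$ be weight vectors, and let $\Delta\in\mathbb{R}^{S\times S}$ and $\Sigma=\mathbf{1}_S v^T+v\mathbf{1}_S^T-\tfrac12\Delta$ (for some $v\in\mathbb{R}^S$) be as in the context, with $\Sigma$ positive definite. Let $P=I_S-\mathbf{1}_S w_S^T$ and $\tilde X=XP$. (DPCoA.) Let $U$ have as columns orthonormal eigenvectors of $D_{w_S}^{1/2}P(-\tfrac12\Delta)P^TD_{w_S}^{1/2}$ associated with its positive eigenvalues, collected in the diagonal matrix $\Lambda$, and put $Z=D_{w_S}^{-1/2}U\Lambda^{1/2}$ and $Y=XZ$. Let $r=\operatorname{rank}(Y)$, let $\Phi$ be the $r\times r$ diagonal matrix of the nonzero eigenvalues of $Y^TD_{w_L}Y$ in decreasing order, and let $F$ have as columns corresponding orthonormal eigenvectors ($F^TF=I_r$). The DPCoA location coordinates are $YF$ and the DPCoA species coordinates are $ZF$. (gPCA.) Let $\Psi$ be the diagonal matrix of the nonzero eigenvalues of $\tilde X^TD_{w_L}\tilde X\Sigma$ in decreasing order, and let $A\in\mathbb{R}^{S\times r'}$ have as columns corresponding eigenvectors normalized so that $A^T\Sigma A=I$. Then $r'=r$ and $\Psi=\Phi$. Moreover, if these nonzero eigenvalues are pairwise distinct, there is a diagonal matrix $E$ with diagonal entries in $\{+1,-1\}$ such that $$YF=\tilde X\Sigma A\,E\qquad\text{and}\qquad ZF=P\Sigma A\,E,$$ i.e.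 the location coordinates of DPCoA coincide with the gPCA coordinates $\tilde X\Sigma A$ of the triplet $(\tilde X,\Sigma,D_{w_L})$, and the DPCoA species coordinates coincide with $P\Sigma A$ (the images of the centered standard basis vectors $e_s$ under the gPCA transformation), up to the same column sign changes.
   Context: $S$ species and $L$ locations. $X\in\mathbb{R}^{L\times S}$ has nonnegative entries and each row sums to $1$ (each row is a location profile). $w_S\in\mathbb{R}^S$ and $w_L\in\mathbb{R}^L$ have strictly positive entries each summing to $1$; for a vector $w$, $D_w$ denotes the diagonal matrix with diagonal $w$, and $\mathbf{1}_m$ is the all-ones vector in $\mathbb{R}^m$. $\Delta\in\mathbb{R}^{S\times S}$ is a symmetric matrix with zero diagonal (a matrix of squared dissimilarities between species) which is Euclidean in the sense that $P(-\tfrac12\Delta)P^T$ is positive semidefinite, where $P=I_S-\mathbf{1}_Sw_S^T$. $v\in\mathbb{R}^S$ is any vector for which $\Sigma=\mathbf{1}_Sv^T+v\mathbf{1}_S^T-\tfrac12\Delta$ is positive definite. *)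

(* Defs.v *)
(* real closed field R (square roots needed). *)
From HB Require Import structures.
From mathcomp Require Import all_boot all_order all_algebra.
Set Implicit Arguments. Unset Strict Implicit. Unset Printing Implicit Defensive.
Import Order.TTheory GRing.Theory Num.Theory.
Local Open Scope ring_scope.

Section Defs.
Variable R : rcfType.

Definition ones (m : nat) : 'cV[R]_m := const_mx 1.

Definition Dw (n : nat) (w : 'rV[R]_n) : 'M[R]_n := diag_mx w.
Definition Dsqrt (n : nat) (w : 'rV[R]_n) : 'M[R]_n :=
  diag_mx (map_mx (fun x => Num.sqrt x) w).
Definition Dinvsqrt (n : nat) (w : 'rV[R]_n) : 'M[R]_n :=
  diag_mx (map_mx (fun x => (Num.sqrt x)^-1) w).

Definition Pmat (n : nat) (w : 'rV[R]_n) : 'M[R]_n := 1%:M - ones n *m w.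

Definition Sigma (n : nat) (v : 'cV[R]_n) (Delta : 'M[R]_n) : 'M[R]_n :=
  ones n *m v^T + v *m (ones n)^T - 2^-1 *: Delta.

Definition psd (n : nat) (M : 'M[R]_n) : Prop :=
  forall x : 'cV[R]_n, 0 <= (x^T *m M *m x) 0 0.

Definition posdef (n : nat) (M : 'M[R]_n) : Prop :=
  forall x : 'cV[R]_n, x != 0 -> 0 < (x^T *m M *m x) 0 0.

Definition weight (n : nat) (w : 'rV[R]_n) : Prop :=
  (forall i, 0 < w 0 i) /\ \sum_i w 0 i = 1.

Definition nonincreasing_diag (n : nat) (d : 'rV[R]_n) : Prop :=
  forall i j : 'I_n, (i <= j)%N -> d 0 j <= d 0 i.

End Defs.

(* Main.v *)
Require Import Defs.
From HB Require Import structures.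
From mathcomp Require Import all_boot all_order all_algebra.
From mathcomp Require Import ring lra zify.
Import Order.TTheory GRing.Theory Num.Theory.
Local Open Scope ring_scope.

Section Gen.
Set Implicit Arguments. Unset Strict Implicit.
Variable R : rcfType.

Lemma sylvester_char (m n : nat) (A : 'M[R]_(m, n)) (B : 'M[R]_(n, m)) :
  'X^n * char_poly (A *m B) = 'X^m * char_poly (B *m A).
Proof.
set a := map_mx polyC A; set b := map_mx polyC B.
pose M := block_mx ('X%:M : 'M_m) a b (1%:M : 'M_n).
have h1 : M *m block_mx 1%:M 0 (- b) 1%:M = block_mx (char_poly_mx (A *m B)) a 0 1%:M.
  rewrite mulmx_block !mulmx0 !mulmx1 !mul1mx !add0r !mulmxN addrN.
  by rewrite /char_poly_mx map_mxM.
have h2 : block_mx 1%:M 0 (- b) ('X%:M : 'M_n) *m M = block_mx ('X%:M : 'M_m) a 0 (char_poly_mx (B *m A)).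
  rewrite mulmx_block !mul0mx !mul1mx !addr0 !mulNmx mul_mx_scalar mul_scalar_mx.
  rewrite addNr mulmx1 addrC /char_poly_mx map_mxM.
  by [].

have := congr1 determinant h1; rewrite det_mulmx det_lblock det_ublock !det1 !mulr1 => e1.
have := congr1 determinant h2; rewrite det_mulmx det_lblock det_ublock !det1 mul1r !det_scalar => e2.
rewrite /char_poly -e1 -e2 mulrC; congr (_ * _).
Qed.
Lemma trD m n (A B : 'M[R]_(m,n)) : (A + B)^T = A^T + B^T.
Proof. by apply/matrixP => i j; rewrite !mxE. Qed.
Lemma trB m n (A B : 'M[R]_(m,n)) : (A - B)^T = A^T - B^T.
Proof. by apply/matrixP => i j; rewrite !mxE. Qed.
Lemma trN m n (A : 'M[R]_(m,n)) : (- A)^T = - A^T.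
Proof. by apply/matrixP => i j; rewrite !mxE. Qed.
Lemma trZ m n a (A : 'M[R]_(m,n)) : (a *: A)^T = a *: A^T.
Proof. by apply/matrixP => i j; rewrite !mxE. Qed.

Lemma qdelta n (M : 'M[R]_n) i j :
  (((delta_mx i (0 : 'I_1))^T *m M *m delta_mx j (0 : 'I_1)) 0 0) = M i j.
Proof. by rewrite trmx_delta -rowE -colE !mxE. Qed.

Lemma qdelta' n (M : 'M[R]_n) i j :
  (delta_mx i (0 : 'I_1))^T *m M *m delta_mx j (0 : 'I_1) = (M i j)%:M.
Proof. by apply/matrixP => a b; rewrite !ord1 qdelta mxE. Qed.

Lemma psd_zero n (M : 'M[R]_n) : M^T = M ->
  (forall x : 'cV[R]_n, 0 <= (x^T *m M *m x) 0 0) -> \tr M = 0 -> M = 0.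
Proof.
move=> Msym Mpsd Mtr.
have dge0 i : 0 <= M i i by rewrite -qdelta.
have d0 i : M i i = 0.
  move: Mtr; rewrite /mxtrace => /psumr_eq0P; apply => // j _.
apply/matrixP => i j; rewrite mxE.
have [->|nij] := eqVneq i j; first exact: d0.
have := Mpsd (delta_mx i 0 - M i j *: delta_mx j 0).
rewrite trB trZ !mulmxBl !mulmxBr -!scalemxAl -!scalemxAr -?scalemxAl ?scalerA !qdelta' !mxE /= !mulr1n !d0.
have -> : M j i = M i j by rewrite -{1}Msym mxE.
move: (M i j) => c h.
have hc : c * c <= 0 by nra.
by apply/eqP; rewrite -sqrf_eq0 eq_le sqr_ge0 andbT expr2.
Qed.


Definition dseq r (d : 'rV[R]_r) := [seq d 0 i | i <- enum 'I_r].

Lemma size_dseq r (d : 'rV[R]_r) : size (dseq d) = r.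
Proof. by rewrite size_map size_enum_ord. Qed.

Lemma prod_dseq r (d : 'rV[R]_r) :
  \prod_(i < r) ('X - (d 0 i)%:P) = \prod_(x <- dseq d) ('X - x%:P).
Proof. by rewrite big_map big_enum. Qed.

Lemma sum_dseq r (d : 'rV[R]_r) : \sum_(i < r) d 0 i = \sum_(x <- dseq d) x.
Proof. by rewrite big_map big_enum. Qed.

Lemma trace_charpoly k r (H : 'M[R]_k) (d : 'rV[R]_r) :
  char_poly H = 'X^(k - r) * \prod_(i < r) ('X - (d 0 i)%:P) ->
  (r <= k)%N /\ \tr H = \sum_i d 0 i.
Proof.
move=> hc.
have hrk : (r <= k)%N.
  have := size_char_poly H; rewrite hc prod_dseq size_mul ?polyXn_eq0 ?monic_neq0 ?monic_prod_XsubC ?monicXn //.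
  rewrite size_polyXn size_prod_XsubC size_dseq /=; lia.
split => //.
case: r d hc hrk => [|r] d hc hrk.
  rewrite big_ord0 subn0 mulr1 in hc; rewrite big_ord0.
  case: k H hc {hrk} => [|k] H hc; first by rewrite /mxtrace big_ord0.
  by apply/eqP; rewrite -oppr_eq0 -char_poly_trace // hc coefXn /= (ltn_eqF (ltnSn k)) /=.
apply: oppr_inj; rewrite -char_poly_trace; last by lia.
rewrite hc coefXnM ifF; last by apply/negbTE; rewrite -leqNgt; lia.
have -> : (k.-1 - (k - r.+1) = (size (dseq d)).-1)%N by rewrite size_dseq; lia.
by rewrite prod_dseq coefPn_prod_XsubC ?size_dseq // sum_dseq.
Qed.


Lemma complete k r (H : 'M[R]_k) (F : 'M[R]_(k, r)) (d : 'rV[R]_r) :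
  H^T = H -> (forall x : 'cV[R]_k, 0 <= (x^T *m H *m x) 0 0) ->
  F^T *m F = 1%:M -> H *m F = F *m diag_mx d ->
  char_poly H = 'X^(k - r) * \prod_(i < r) ('X - (d 0 i)%:P) ->
  H = F *m diag_mx d *m F^T.
Proof.
move=> Hs Hp FF HF hc.
set G := F *m diag_mx d *m F^T.
set Q : 'M[R]_k := 1%:M - F *m F^T.
have QT : Q^T = Q by rewrite /Q trB trmx1 trmx_mul trmxK.
have FtH : F^T *m H = diag_mx d *m F^T.
  by apply: trmx_inj; rewrite !trmx_mul !trmxK Hs HF tr_diag_mx.
have QH : Q *m H = H - G by rewrite /Q mulmxBl mul1mx -mulmxA FtH mulmxA.
have hGF : (H - G) *m F = 0 by rewrite mulmxBl HF /G -!mulmxA FF mulmx1 subrr.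
have eM : Q *m H *m Q = H - G by rewrite QH /Q mulmxBr mulmx1 mulmxA hGF mul0mx subr0.
have GT : G^T = G by rewrite /G !trmx_mul trmxK tr_diag_mx mulmxA.
apply/eqP; rewrite -subr_eq0; apply/eqP; apply: psd_zero.
- by rewrite trB Hs GT.
- move=> x; rewrite -eM.
  have -> : x^T *m (Q *m H *m Q) *m x = (Q *m x)^T *m H *m (Q *m x).
    by rewrite trmx_mul QT !mulmxA.
  exact: Hp.
- have ht := (trace_charpoly hc).2.
  have trG : \tr G = \sum_i d 0 i by rewrite /G mxtrace_mulC mulmxA FF mul1mx mxtrace_diag.
  rewrite raddfB /= trG; apply/eqP; rewrite subr_eq0; apply/eqP; exact: ht.

Qed.


Lemma Xn_prod n : 'X^n = \prod_(x <- nseq n (0:R)) ('X - x%:P).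
Proof.
elim: n => [|n IH]; first by rewrite big_nil expr0.
by rewrite /= big_cons exprS IH subr0.
Qed.

Lemma count0_dseq r (d : 'rV[R]_r) : (forall i, d 0 i != 0) ->
  count (pred1 0) (dseq d) = 0%N.
Proof.
move=> hd; rewrite /dseq count_map; apply/eqP; rewrite eqn0Ngt -has_count.
by apply/hasPn => i _ /=; exact: hd.
Qed.

Lemma eig_eq k n r r' (H1 : 'M[R]_k) (H2 : 'M[R]_n) (phi : 'rV[R]_r) (psi : 'rV[R]_r') :
  'X^n * char_poly H1 = 'X^k * char_poly H2 ->
  char_poly H1 = 'X^(k - r) * \prod_(i < r) ('X - (phi 0 i)%:P) ->
  char_poly H2 = 'X^(n - r') * \prod_(i < r') ('X - (psi 0 i)%:P) ->
  (forall i, phi 0 i != 0) -> (forall i, psi 0 i != 0) ->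
  r' = r /\ perm_eq (dseq phi) (dseq psi).
Proof.
move=> hs h1 h2 nz1 nz2.
have [rk _] := trace_charpoly h1; have [rn _] := trace_charpoly h2.
move: hs; rewrite h1 h2 !mulrA -!exprD !prod_dseq !Xn_prod -!big_cat => /prod_XsubC_eq hp.
have := (permP hp) (pred1 0); rewrite !count_cat !count_nseq !count0_dseq //= eqxx /= !mul1n !addn0 => e.
have rr : r' = r by lia.
split => //; subst r'.
move: hp; have -> : (n + (k - r) = k + (n - r))%N by lia.
by rewrite perm_cat2l.
Qed.

Lemma nth_dseq r (d : 'rV[R]_r) (i : 'I_r) : nth 0 (dseq d) i = d 0 i.
Proof. by rewrite /dseq (nth_map i) ?size_enum_ord ?ltn_ord // nth_ord_enum. Qed.

Lemma sorted_dseq r (d : 'rV[R]_r) : nonincreasing_diag d ->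
  sorted (fun x y => y <= x) (dseq d).
Proof.
move=> hd; apply/(sortedP 0) => n; rewrite size_dseq => hn.
have hn0 : (n < r)%N by lia.
have := nth_dseq d (Ordinal hn0); have := nth_dseq d (Ordinal hn) => /= -> ->.
by apply: hd => /=.
Qed.

Lemma dseq_eq r (d1 d2 : 'rV[R]_r) : nonincreasing_diag d1 -> nonincreasing_diag d2 ->
  perm_eq (dseq d1) (dseq d2) -> d1 = d2.
Proof.
move=> h1 h2 hp.
have e : dseq d1 = dseq d2.
  apply: (sorted_eq (leT := fun x y : R => y <= x)) => //.
  - by move=> x y z hxy hyz; exact: le_trans hyz hxy.
  - by move=> x y /andP [a b]; apply/eqP; rewrite eq_le a b.
  - exact: sorted_dseq.
  - exact: sorted_dseq.
apply/matrixP => a i; rewrite [a]ord1 -!nth_dseq e //.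
Qed.

Lemma posdiag_zero m n (M : 'M[R]_(m, n)) (w : 'rV[R]_m) : (forall l, 0 < w 0 l) ->
  M^T *m diag_mx w *m M = 0 -> M = 0.
Proof.
move=> wp h; apply/matrixP => l j; rewrite mxE.
have := congr1 (fun A : 'M[R]_n => A j j) h; rewrite mul_mx_diag !mxE => /psumr_eq0P hz.
have : w 0 l * M l j ^+ 2 = 0.
  have hz' := hz (fun i _ => ltac:(by rewrite !mxE mulrAC -expr2 mulr_ge0 ?sqr_ge0 // ltW)) l isT.
  by rewrite -[RHS]hz' !mxE; ring.
by move/eqP; rewrite mulf_eq0 sqrf_eq0 (gt_eqF (wp l)) /= => /eqP.
Qed.

Lemma psd_diag m (w : 'rV[R]_m) (u : 'cV[R]_m) : (forall l, 0 < w 0 l) ->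
  0 <= (u^T *m diag_mx w *m u) 0 0.
Proof.
move=> wp; rewrite mul_mx_diag !mxE; apply: sumr_ge0 => l _.
by rewrite !mxE mulrAC -expr2 mulr_ge0 ?sqr_ge0 // ltW.
Qed.

End Gen.

Theorem mainTheorem1 (R : rcfType) (L S : nat)
  (X : 'M[R]_(L, S)) (wS : 'rV[R]_S) (wL : 'rV[R]_L)
  (Delta : 'M[R]_S) (v : 'cV[R]_S)
  (* context hypotheses *)
  (hXnn : forall l s, 0 <= X l s)
  (hXrow : forall l, \sum_s X l s = 1)
  (hwS : weight wS) (hwL : weight wL)
  (hDsym : Delta^T = Delta)
  (hDdiag : forall s, Delta s s = 0)
  (hDeucl : psd (Pmat wS *m (- (2^-1 *: Delta)) *m (Pmat wS)^T))
  (hSig : posdef (Sigma v Delta))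
  (* DPCoA *)
  (k : nat) (U : 'M[R]_(S, k)) (lam : 'rV[R]_k)
  (hUorth : U^T *m U = 1%:M)
  (hUeig : (Dsqrt wS *m Pmat wS *m (- (2^-1 *: Delta)) *m (Pmat wS)^T *m Dsqrt wS)
             *m U = U *m diag_mx lam)
  (hlampos : forall i, 0 < lam 0 i)
  (hlamall : char_poly (Dsqrt wS *m Pmat wS *m (- (2^-1 *: Delta)) *m (Pmat wS)^T
                        *m Dsqrt wS)
             = 'X^(S - k) * \prod_(i < k) ('X - (lam 0 i)%:P))
  (r : nat) (hr : r = \rank (X *m (Dinvsqrt wS *m U *m diag_mx (map_mx (fun x => Num.sqrt x) lam))))
  (phi : 'rV[R]_r) (F : 'M[R]_(k, r))
  (hForth : F^T *m F = 1%:M)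
  (hFeig : let Y := X *m (Dinvsqrt wS *m U *m diag_mx (map_mx (fun x => Num.sqrt x) lam)) in
           (Y^T *m Dw wL *m Y) *m F = F *m diag_mx phi)
  (hphinz : forall i, phi 0 i != 0)
  (hphiall : let Y := X *m (Dinvsqrt wS *m U *m diag_mx (map_mx (fun x => Num.sqrt x) lam)) in
             char_poly (Y^T *m Dw wL *m Y) = 'X^(k - r) * \prod_(i < r) ('X - (phi 0 i)%:P))
  (hphidec : nonincreasing_diag phi)
  (* gPCA *)
  (r' : nat) (psi : 'rV[R]_r') (A : 'M[R]_(S, r'))
  (hAnorm : A^T *m Sigma v Delta *m A = 1%:M)
  (hAeig : ((X *m Pmat wS)^T *m Dw wL *m (X *m Pmat wS) *m Sigma v Delta) *m A
           = A *m diag_mx psi)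
  (hpsinz : forall i, psi 0 i != 0)
  (hpsiall : char_poly ((X *m Pmat wS)^T *m Dw wL *m (X *m Pmat wS) *m Sigma v Delta)
             = 'X^(S - r') * \prod_(i < r') ('X - (psi 0 i)%:P))
  (hpsidec : nonincreasing_diag psi) :
  let Z := Dinvsqrt wS *m U *m diag_mx (map_mx (fun x => Num.sqrt x) lam) in
  let Y := X *m Z in
  r' = r /\
  (forall (i : 'I_r) (j : 'I_r'), nat_of_ord i = nat_of_ord j -> psi 0 j = phi 0 i) /\
  ((forall i j : 'I_r, phi 0 i = phi 0 j -> i = j) ->
   exists e : 'rV[R]_r',
     (forall j, e 0 j = 1 \/ e 0 j = -1) /\
     (forall (l : 'I_L) (i : 'I_r) (j : 'I_r'), nat_of_ord i = nat_of_ord j ->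
        (Y *m F) l i = (X *m Pmat wS *m Sigma v Delta *m A *m diag_mx e) l j) /\
     (forall (s : 'I_S) (i : 'I_r) (j : 'I_r'), nat_of_ord i = nat_of_ord j ->
        (Z *m F) s i = (Pmat wS *m Sigma v Delta *m A *m diag_mx e) s j)).
Proof.
move=> Z Y.
have hFeig' : (Y^T *m Dw wL *m Y) *m F = F *m diag_mx phi := hFeig.
have hphiall' : char_poly (Y^T *m Dw wL *m Y) = 'X^(k - r) * \prod_(i < r) ('X - (phi 0 i)%:P) := hphiall.
clear hFeig hphiall.
set P := Pmat wS in hDeucl hUeig hlamall hr hAeig hpsiall Z Y hFeig' hphiall' *.
set Sg := Sigma v Delta in hSig hAnorm hAeig hpsiall *.
set D := Dw wL in hFeig' hphiall' hAeig hpsiall *.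
set Ds := Dsqrt wS in hUeig hlamall hr Z Y hFeig' hphiall' *.
set Di := Dinvsqrt wS in hr Z Y hFeig' hphiall' *.
set N := - (2^-1 *: Delta) in hDeucl hUeig hlamall.
set Lh := diag_mx (map_mx (fun x => Num.sqrt x) lam) in hr Z Y hFeig' hphiall' *.
have [wSp wS1] := hwS; have [wLp wL1] := hwL.
have sqS i : Num.sqrt (wS 0 i) != 0 by rewrite gt_eqF // sqrtr_gt0.
have DsT : Ds^T = Ds by rewrite /Ds /Dsqrt tr_diag_mx.
have DiT : Di^T = Di by rewrite /Di /Dinvsqrt tr_diag_mx.
have DT : D^T = D by rewrite /D /Dw tr_diag_mx.
have DiDs : Di *m Ds = 1%:M.
  apply/matrixP => i j; rewrite /Di /Ds /Dinvsqrt /Dsqrt mul_diag_mx !mxE.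
  by case: eqVneq => _; rewrite ?mulr1n ?mulr0n ?mulr0 ?mulVf.
have DsDi : Ds *m Di = 1%:M.
  apply/matrixP => i j; rewrite /Di /Ds /Dinvsqrt /Dsqrt mul_diag_mx !mxE.
  by case: eqVneq => _; rewrite ?mulr1n ?mulr0n ?mulr0 ?mulfV.
have P1 : P *m ones R S = 0.
  rewrite /P /Pmat mulmxBl mul1mx -mulmxA.
  have -> : wS *m ones R S = 1%:M.
    apply/matrixP => a b; rewrite !ord1 !mxE /= -[RHS]wS1.
    by apply: eq_bigr => j _; rewrite !mxE mulr1.
  by rewrite mulmx1 subrr.
have NT : N^T = N by rewrite /N trN trZ hDsym.
have PSP : P *m Sg *m P^T = P *m N *m P^T.
  have -> : Sg = (ones R S *m v^T + v *m (ones R S)^T) + N by [].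
  have h0 : P *m (v *m (ones R S)^T) *m P^T = 0 by rewrite -!mulmxA -trmx_mul P1 trmx0 !mulmx0.
  have h1 : P *m (ones R S *m v^T) = 0 by rewrite mulmxA P1 mul0mx.
  by rewrite (mulmxDr P) (mulmxDr P) h1 add0r mulmxDl h0 add0r.
have B0sym : (Ds *m P *m N *m P^T *m Ds)^T = Ds *m P *m N *m P^T *m Ds.
  by rewrite !trmx_mul !trmxK NT DsT !mulmxA.
have B0psd : forall x : 'cV[R]_S, 0 <= (x^T *m (Ds *m P *m N *m P^T *m Ds) *m x) 0 0.
  move=> x; have -> : x^T *m (Ds *m P *m N *m P^T *m Ds) *m x = (Ds *m x)^T *m (P *m N *m P^T) *m (Ds *m x).
    by rewrite trmx_mul DsT !mulmxA.
  exact: hDeucl.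
have hB0 := complete B0sym B0psd hUorth hUeig hlamall.
have LhT : Lh^T = Lh by rewrite /Lh tr_diag_mx.
have LhLh : Lh *m Lh = diag_mx lam.
  rewrite /Lh mulmx_diag; congr diag_mx; apply/rowP => j; rewrite !mxE -expr2 sqr_sqrtr //; exact: ltW.
have ZZ : Z *m Z^T = P *m Sg *m P^T.
  have e1 : P *m N *m P^T = Di *m (Ds *m P *m N *m P^T *m Ds) *m Di.
    by rewrite !mulmxA DiDs mul1mx -[RHS]mulmxA DsDi mulmx1.
  rewrite PSP e1 hB0 /Z !trmx_mul LhT DiT -LhLh !mulmxA //.
set H := Y^T *m D *m Y in hFeig' hphiall' *.
set K := (X *m P)^T *m D *m (X *m P) in hAeig hpsiall *.
have hHZ : H = Z^T *m (X^T *m D *m X *m Z) by rewrite /H /Y trmx_mul !mulmxA.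
have s1 := sylvester_char (Z^T) (X^T *m D *m X *m Z).
have hWZ : X^T *m D *m X *m Z *m Z^T = (X^T *m D *m X *m P *m Sg) *m P^T
  by rewrite -mulmxA ZZ !mulmxA.
rewrite -hHZ hWZ in s1.
have s2 := sylvester_char (X^T *m D *m X *m P *m Sg) P^T.
have hPC : P^T *m (X^T *m D *m X *m P *m Sg) = K *m Sg by rewrite /K trmx_mul !mulmxA.
rewrite hPC in s2.
have s3 : 'X^S * char_poly H = 'X^k * char_poly (K *m Sg).
  by rewrite s1 (mulfI _ s2) // expf_neq0 // polyX_eq0.
have [rr hperm] := eig_eq s3 hphiall' hpsiall hphinz hpsinz.
subst r'.
have epp := dseq_eq hphidec hpsidec hperm.
subst psi.
split => //; split; first by move=> i j /ord_inj ->.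
move=> hdist.
set Phi := diag_mx phi in hFeig' hAeig *.
have PhiT : Phi^T = Phi by rewrite /Phi tr_diag_mx.
have HT : H^T = H.
  by rewrite /H /Y !trmx_mul !trmxK DT !mulmxA.
have Hpsd : forall x : 'cV[R]_k, 0 <= (x^T *m H *m x) 0 0.
  move=> x; have -> : x^T *m H *m x = (Y *m x)^T *m D *m (Y *m x) by rewrite /H (trmx_mul Y x) !mulmxA.
  rewrite /D /Dw; exact: psd_diag.
have hH := complete HT Hpsd hForth hFeig' hphiall'.
set Q : 'M[R]_k := 1%:M - F *m F^T.
have QT : Q^T = Q by rewrite /Q trB trmx1 trmx_mul trmxK.
have FQ : F^T *m Q = 0 by rewrite /Q mulmxBr mulmx1 mulmxA hForth mul1mx subrr.
have YQ : Y *m Q = 0.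
  apply: (posdiag_zero wLp).
  have -> : (Y *m Q)^T *m diag_mx wL *m (Y *m Q) = Q^T *m H *m Q by rewrite trmx_mul /H /D /Dw !mulmxA.
  by rewrite hH -!mulmxA FQ !mulmx0.
have YFF : Y = Y *m F *m F^T.
  by have := YQ; rewrite /Q mulmxBr mulmx1 mulmxA => /eqP; rewrite subr_eq0 => /eqP.
have SgT : Sg^T = Sg.
  rewrite /Sg /Sigma trB trZ hDsym !trD !trmx_mul !trmxK; congr (_ - _); exact: addrC.
have YYG : Y *m Y^T = X *m P *m Sg *m (X *m P)^T.
  by rewrite /Y (trmx_mul X Z) mulmxA -(mulmxA X) ZZ !trmx_mul !mulmxA.
set Yf := Y *m F.
set Gg := X *m P *m Sg *m A.
set G := X *m P *m Sg *m (X *m P)^T in YYG *.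
have GYY : G = Yf *m Yf^T by rewrite -YYG /Yf (trmx_mul Y F) mulmxA -YFF.
have GT : G^T = G by rewrite GYY trmx_mul trmxK.
have F3 : G *m D *m Yf = Yf *m Phi.
  have -> : G *m D *m Yf = Y *m (H *m F) by rewrite -YYG /Yf /H !mulmxA.
  by rewrite hFeig' mulmxA.
have F4 : Yf^T *m D *m Yf = Phi.
  have -> : Yf^T *m D *m Yf = F^T *m (H *m F) by rewrite /Yf /H trmx_mul !mulmxA.
  by rewrite hFeig' mulmxA hForth mul1mx.
have F5 : G *m D *m Gg = Gg *m Phi.
  have -> : G *m D *m Gg = X *m P *m Sg *m (K *m Sg *m A) by rewrite /G /Gg /K !mulmxA.
  by rewrite hAeig !mulmxA.
have F6 : Gg^T *m D *m Gg = Phi.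
  have -> : Gg^T *m D *m Gg = A^T *m Sg *m (K *m Sg *m A) by rewrite /Gg /K !trmx_mul SgT !mulmxA.
  by rewrite hAeig mulmxA hAnorm mul1mx.
set C := Yf^T *m D *m Gg.
have F3T : Yf^T *m D *m G = Phi *m Yf^T.
  by apply: trmx_inj; rewrite (trmx_mul (Yf^T *m D) G) (trmx_mul Yf^T D) (trmx_mul Phi Yf^T) !trmxK DT GT PhiT mulmxA F3.
have F7 : Phi *m C = C *m Phi.
  have -> : Phi *m C = Yf^T *m D *m (G *m D *m Gg).
  by rewrite /C !mulmxA -F3T !mulmxA.
  by rewrite F5 /C !mulmxA.
have F8 : Gg *m Phi = Yf *m C by rewrite -F5 GYY /C !mulmxA.
have Yfdef : Yf = Y *m F by [].
have Ggdef : Gg = X *m P *m Sg *m A by [].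
clearbody C Yf Gg.
have hCd : forall i j : 'I_r, i != j -> C i j = 0.
  move=> i j nij.
  have := congr1 (fun M : 'M[R]_r => M i j) F7; rewrite /Phi mul_diag_mx mul_mx_diag !mxE => h.
  have hne : phi 0 i - phi 0 j != 0.
    rewrite subr_eq0; apply/eqP => e; move/negP: nij; apply; apply/eqP; exact: hdist _ _ e.
  have : C i j * (phi 0 i - phi 0 j) = 0 by rewrite mulrBr mulrC h subrr.
  by move/eqP; rewrite mulf_eq0 (negbTE hne) orbF => /eqP.
pose e : 'rV[R]_r := \row_j (C j j / phi 0 j).
have hGg : Gg = Yf *m diag_mx e.
  apply/matrixP => l j; rewrite mul_mx_diag !mxE.
  have := congr1 (fun M : 'M[R]_(L, r) => M l j) F8.
  rewrite /Phi mul_mx_diag !mxE (bigD1 j) //= big1 ?addr0 => [h|i nij]; last by rewrite hCd ?mulr0.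
  by rewrite mulrA -h mulfK.
have he2 : forall j, e 0 j * e 0 j = 1.
  move=> j.
  have : Gg^T *m D *m Gg = diag_mx e *m (Yf^T *m D *m Yf) *m diag_mx e.
    by rewrite hGg (trmx_mul Yf) tr_diag_mx !mulmxA.
  rewrite F6 F4 /Phi => /(congr1 (fun M : 'M[R]_r => M j j)).
  rewrite mul_mx_diag mul_diag_mx !mxE eqxx mulr1n => h.
  apply: (mulIf (hphinz j)); rewrite mul1r; symmetry; rewrite {1}h; ring.
have EE : diag_mx e *m diag_mx e = 1%:M.
  apply/matrixP => i j; rewrite mul_diag_mx !mxE.
  case: eqVneq => [->|_]; rewrite ?mulr1n ?mulr0n ?mulr0 //; by move: (he2 j); rewrite !mxE; apply.
exists e; split.
  move=> j; have := he2 j; move/eqP; rewrite -expr2 sqrf_eq1 => /orP [] /eqP; [left|right] => //.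
split.
  by move=> l i j /ord_inj ->; rewrite hGg -mulmxA EE mulmx1.
move=> s i j /ord_inj ->.
have SpZ : Z *m F *m Phi = P *m Sg *m P^T *m X^T *m D *m Yf.
  rewrite -mulmxA -hFeig' /H Yfdef /Y (trmx_mul X Z) !mulmxA.
  by rewrite ZZ.
have SpA : P *m Sg *m A *m Phi = P *m Sg *m P^T *m X^T *m D *m Gg.
  by rewrite -mulmxA -hAeig /K Ggdef (trmx_mul X P) !mulmxA.
have hh : P *m Sg *m A *m Phi = Z *m F *m Phi *m diag_mx e.
  by rewrite SpA SpZ hGg !mulmxA.
clearbody e; move: (P *m Sg *m A) (Z *m F) hh => M1 M2 hh.
have := congr1 (fun M : 'M[R]_(S, r) => M s j) hh; rewrite /Phi !mul_mx_diag !mxE => h.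
by apply: (mulIf (hphinz j)); rewrite mulrAC h -[RHS]mulrA he2 mulr1.
Qed.
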